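(* If a choice probability function $q_1$ is QRUM-rationalizable, then it is APT-rationalizable (viewed as the function $q_1(p_1,y):=q_1(p_1)$ of price and income).
   Context: Two goods: good 0 with price $0$ and good 1 with price $p_1\ge0$; all consumers have common income $y>0$, choose one good and spend the remainder on a numeraire. The set of incomes and prices considered is such that prices are small relative to income (the paper writes $p_1\ll y$); in particular $0\le p_1\le y$, and the prices $p_L,p_H$ below lie in $[0,y]$ for every income $y$ considered. QRUM: $q_1$ (a function of price only) is QRUM-rationalizable if there exist a random variable $\eta$ with distribution $H$ and functions $V_0,V_1$, $\beta>0$ (utilities $U_0(y,\eta)=V_0(\eta)+\beta(\eta)y$, $U_1(y-p_1,\eta)=V_1(\eta)+\beta(\eta)(y-p_1)$) such that $q_1(p_1)=\int\mathbb{1}\{V_0(\eta)\le V_1(\eta)-\beta(\eta)p_1\}\,dH(\eta)$ for all $p_1$, where (i) for every $p_1$, $\int\mathbb{1}\{V_0(\eta)=V_1(\eta)-\beta(\eta)p_1\}\,dH(\eta)=0$; (ii) there exist $p_L$ with $\lim_{p_1\searrow p_L}\Pr[V_0(\eta)\le V_1(\eta)-\beta(\eta)p_1]=1$ and $p_H$ with $\lim_{p_1\nearrow p_H}\Pr[V_0(\eta)\le V_1(\eta)-\beta(\eta)p_1]=0$. APT: a function $q_1(p_1,y)$ is APT-rationalizable if there exist $U_0:(0,\infty)\to[0,\infty)$ non-decreasing, $U_1:[0,\infty)\to[0,\infty)$ continuous and strictly increasing, with: for every income $y$ there is $\bar p_1\in[0,y]$ with $U_0(y)\ge U_1(y-\bar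 p_1)$; and a CDF $G$ with $G(0)=0$, such that $q_{1}(p_{1},y)=\mathbb{1}\{U_{0}(y)<U_{1}(y-p_{1})\}\,(1-G(p_{1}))$ for all incomes $y$ and prices $p_1\in[0,y]$ considered. *)

(* Defs.v *)
From HB Require Import structures.
From mathcomp Require Import all_boot all_order all_algebra.
From mathcomp Require Import all_classical all_reals all_analysis.
Set Implicit Arguments. Unset Strict Implicit. Unset Printing Implicit Defensive.
Import Order.TTheory GRing.Theory Num.Theory.
Import numFieldNormedType.Exports.
Local Open Scope classical_set_scope.
Local Open Scope ring_scope.

Definition is_CDF {R : realType} (G : R -> R) : Prop :=
  [/\ {homo G : x y / x <= y},
      (forall a : R, G x @[x --> a^'+] --> G a),
      G x @[x --> -oo] --> (0 : R)
    & G x @[x --> +oo] --> (1 : R)].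

Definition qrum_prob {d} {T : measurableType d} {R : realType}
  (P : probability T R) (V0 V1 beta : T -> R) (p : R) : \bar R :=
  P [set e | V0 e <= V1 e - beta e * p].

(* QRUM-rationalizability of q1 : price -> probability (prices p >= 0),
   with the thresholds pL, pH of condition (ii) exposed. *)
Definition QRUM_rationalizable_with {R : realType} (q1 : R -> R) (pL pH : R)
  : Prop :=
  exists (d : measure_display) (T : measurableType d) (P : probability T R)
         (V0 V1 beta : T -> R),
    [/\ measurable_fun setT V0, measurable_fun setT V1,
        measurable_fun setT beta & (forall e, 0 < beta e)] /\
    [/\
        (forall p, 0 <= p -> (q1 p)%:E = qrum_prob P V0 V1 beta p),
        (forall p, 0 <= p -> P [set e | V0 e = V1 e - beta e * p] = 0%E),
        qrum_prob P V0 V1 beta p @[p --> pL^'+] --> 1%E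
      & qrum_prob P V0 V1 beta p @[p --> pH^'-] --> 0%E].

Definition APT_rationalizable {R : realType} (Y : set R) (q : R -> R -> R)
  : Prop :=
  exists (U0 U1 G : R -> R),
    [/\ (forall y, 0 < y -> 0 <= U0 y),
        (forall x y, 0 < x -> x <= y -> U0 x <= U0 y),
        (forall x, 0 <= x -> 0 <= U1 x),
        {within `[0, +oo[, continuous U1}
      & (forall x y, 0 <= x -> x < y -> U1 x < U1 y)] /\
    [/\
        (forall y, Y y -> exists2 pbar, 0 <= pbar <= y & U1 (y - pbar) <= U0 y),
        is_CDF G, G 0 = 0
      & forall y p1, Y y -> 0 <= p1 <= y ->
          q p1 y = (if U0 y < U1 (y - p1) then 1 else 0) * (1 - G p1)].

(* Main.v *)
Require Import Defs.
From HB Require Import structures.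
From mathcomp Require Import all_boot all_order all_algebra.
From mathcomp Require Import all_classical all_reals all_analysis.
From mathcomp Require Import ring lra.
From mathcomp Require Import measurable_realfun.
Import Order.TTheory GRing.Theory Num.Theory.
Import numFieldNormedType.Exports.
Local Open Scope classical_set_scope.
Local Open Scope ring_scope.

Section H.
Variable R : realType.

Lemma near_right_ex (a : R) (P : R -> Prop) :
  (\forall x \near a^'+, P x) -> exists2 d, 0 < d & forall x, a < x < a + d -> P x.
Proof.
move=> [d /= d0 H]; exists d => // x /andP[ax xd]; apply: H => //=.
rewrite /ball /= ltr0_norm ?subr_lt0 // opprB ltrBlDl //.
Qed.

Lemma near_left_ex (a : R) (P : R -> Prop) :
  (\forall x \near a^'-, P x) -> exists2 d, 0 < d & forall x, a - d < x < a -> P x.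
Proof.
move=> [d /= d0 H]; exists d => // x /andP[ax xd]; apply: H => //=.
rewrite /ball /= gtr0_norm ?subr_gt0 // ltrBlDr -ltrBlDl //.
Qed.

Lemma near_right (a d : R) (P : R -> Prop) : 0 < d ->
  (forall x, a < x < a + d -> P x) -> \forall x \near a^'+, P x.
Proof.
move=> d0 H; exists d => // x /= ax xa; apply: H; rewrite xa /=.
move: ax; rewrite /ball /= ltr0_norm ?subr_lt0 // opprB ltrBlDl //.
Qed.
Lemma cdf_of (F : R -> R) (M : R) :
  (forall x y, 0 <= x -> x <= y -> F y <= F x) ->
  (forall x, 0 <= x -> 0 <= F x <= 1) -> F 0 = 1 ->
  (forall x, M <= x -> F x = 0) ->
  (forall a, 0 <= a -> forall e, 0 < e ->
     exists2 d, 0 < d & forall x, a < x < a + d -> F a - e < F x) ->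
  is_CDF (fun p => if p < 0 then 0 else 1 - F p).
Proof.
move=> Fmono Fb F0 FM Frc; split.
- move=> x y xy; case: ifPn => x0; case: ifPn => y0 //.
  + by rewrite subr_ge0; have /andP[] := Fb y ltac:(by rewrite leNgt).
  + by move: x0; rewrite (le_lt_trans xy y0).
  + by rewrite lerB // Fmono // leNgt.
- move=> a; apply/cvgrPdist_lt => e e0.
  have [a0|a0] := ltP a 0.
  + apply: (@near_right a (- a)); first by rewrite oppr_gt0.
    move=> x /andP[_]; rewrite addrN => x0; by rewrite x0 subrr normr0.
  + have [d d0 Hd] := Frc a a0 e e0.
    apply: (@near_right a d _ d0) => x /andP[ax xad].
    have x0 : 0 <= x by apply/ltW/(le_lt_trans a0 ax).
    rewrite (ltNge x 0) x0 /=.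
    have h1 := Fmono a x a0 (ltW ax).
    have h2 : F a - e < F x by apply: Hd; rewrite ax xad.
    rewrite ler0_norm; first lra.
    lra.
- apply/cvgrPdist_lt => e e0.
  near=> x.
  rewrite ifT ?subrr ?normr0 //.
- apply/cvgrPdist_lt => e e0.
  near=> x.
  rewrite ifF; last first.
    apply/negbTE; rewrite -leNgt; near: x; exact: nbhs_pinfty_ge.
  rewrite FM ?subr0 ?subrr ?normr0 //.
Unshelve. all: by end_near.
Qed.
Lemma apt_of (Y : set R) (q1 F : R -> R) (pH : R) :
  (forall y, Y y -> 0 <= pH <= y) ->
  is_CDF (fun p => if p < 0 then 0 else 1 - F p) -> F 0 = 1 ->
  (forall y p, Y y -> 0 <= p <= y -> q1 p = F p /\ (pH <= p -> q1 p = 0)) ->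
  APT_rationalizable Y (fun p1 y => q1 p1).
Proof.
move=> HpH cdf F0 Feq.
exists (fun y => Num.max (y - pH) 0), (fun x => x),
  (fun p => if p < 0 then 0 else 1 - F p); split.
- split.
  + by move=> y _; rewrite le_max lexx orbT.
  + move=> x y _ xy; rewrite ge_max; apply/andP; split; rewrite le_max; apply/orP.
      by left; lra.
    by right.
  + by [].
  + by apply: continuous_subspaceT => x; exact: cvg_id.
  + by [].
- split.
  + move=> y Yy; exists pH; first by case/andP: (HpH y Yy) => -> ->.
    by rewrite le_max lexx.
  + exact: cdf.
  + by rewrite ltxx F0 subrr.
  + move=> y p Yy /andP[p0 py].
    have [e1 e2] := Feq y p Yy (introT andP (conj p0 py)).
    have /andP[pH0 pHy] := HpH y Yy.
    have -> : Num.max (y - pH) 0 = y - pH by apply/max_idPl; rewrite subr_ge0.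
    rewrite ltrD2l ltrN2 (ltNge p 0) p0 /=.
    case: ltP => [ppH|pHp]; first by rewrite mul1r e1; lra.
    by rewrite mul0r e2.
Qed.
End H.
Theorem theorem3 (R : realType) (Y : set R) (q1 : R -> R) (pL pH : R) :
  (forall y, Y y -> 0 < y) ->
  (forall y, Y y -> 0 <= pL <= y /\ 0 <= pH <= y) ->
  QRUM_rationalizable_with q1 pL pH ->
  APT_rationalizable Y (fun p1 y => q1 p1).
Proof.
move=> Ypos Yp [d [T [P [V0 [V1 [beta [[mV0 mV1 mb bpos] [Hq Htie HL HH]]]]]]]].
pose S := fun p => [set e | V0 e <= V1 e - beta e * p].
have mS : forall p, measurable (S p).
  move=> p.
  have mg : measurable_fun setT (fun x => V1 x - beta x * p).
    by apply: measurable_funB => //; apply: measurable_funM => //; exact: measurable_cst.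
  suff -> : S p = (fun x => V0 x <= V1 x - beta x * p) @^-1` [set true].
    by rewrite -[X in measurable X]setTI; apply: (measurable_fun_ler mV0 mg measurableT).
  by apply/seteqP; split => e.
have Smono : forall p p', p <= p' -> S p' `<=` S p.
  move=> p p' pp' e /= h; apply: (le_trans h); rewrite lerB // ler_wpM2l // ltW //.
pose q := fun p => fine (P (S p)).
have Qfin : forall p, P (S p) = (q p)%:E.
  move=> p; rewrite /q fineK // ge0_fin_numE ?measure_ge0 //.
  by apply: (le_lt_trans (probability_le1 P (mS p))); exact: ltry.
have qb : forall p, 0 <= q p <= 1.
  move=> p; rewrite -!lee_fin -Qfin measure_ge0 /=; exact: probability_le1.
have qmono : forall p p', p <= p' -> q p' <= q p.
  move=> p p' pp'; rewrite -lee_fin -!Qfin; apply: le_measure; rewrite ?inE //.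
  exact: Smono.
have Qq : (fun p => qrum_prob P V0 V1 beta p) = (fun p => (q p)%:E).
  by apply: funext => p; rewrite -Qfin.
have HH' : q p @[p --> pH^'-] --> (0:R).
  by move: HH; rewrite Qq => /fine_cvgP [_ H].
have HL' : q p @[p --> pL^'+] --> (1:R).
  by move: HL; rewrite Qq => /fine_cvgP [_ H].
have qH : forall p, pH <= p -> q p = 0.
  move=> p pHp; apply/eqP; rewrite eq_le (andP (qb p)).1 andbT leNgt; apply/negP => qp0.
  have := HH'; move/cvgrPdist_lt => /(_ _ qp0) /near_left_ex [e e0 He].
  have := He (pH - e / 2); rewrite sub0r normrN.
  have h1 : pH - e < pH - e / 2 < pH by apply/andP; split; lra.
  move=> /(_ h1); rewrite ger0_norm ?(andP (qb _)).1 //.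
  have := qmono (pH - e/2) p ltac:(lra); lra.
have q0 : 0 <= pL -> q 0 = 1.
  move=> pL0; apply/eqP; rewrite eq_le (andP (qb 0)).2 /= leNgt; apply/negP => q01.
  have e0 : 0 < 1 - q 0 by lra.
  have := HL'; move/cvgrPdist_lt => /(_ _ e0) /near_right_ex [e e1 He].
  have h1 : pL < pL + e / 2 < pL + e by apply/andP; split; lra.
  have := He _ h1.
  have := qmono 0 (pL + e/2) ltac:(lra).
  have := qb (pL + e/2).
  rewrite ger0_norm; [lra|].
  move: (qb (pL + e/2)) => /andP[_ ?]; lra.
have qrc : forall a, 0 <= a -> forall e, 0 < e ->
    exists2 d, 0 < d & forall x, a < x < a + d -> q a - e < q x.
  move=> a a0 e e0.
  pose A := fun n : nat => S (a + n.+1%:R^-1).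
  have mA : forall n, measurable (A n) by move=> n; exact: mS.
  have ndA : nondecreasing_seq A.
    move=> n m nm; apply/subsetPset; apply: Smono; rewrite lerD2l lef_pV2 ?posrE // ler_nat.
    by [].
  pose St := [set e | V0 e < V1 e - beta e * a].
  have UA : \bigcup_n A n = St.
    apply/seteqP; split.
      move=> x [n _]; rewrite /A /S /St /= mulrDr => h.
      have : 0 < beta x * n.+1%:R^-1 by rewrite mulr_gt0.
      move: h; move: (beta x * n.+1%:R^-1) => t; lra.
    move=> x; rewrite /St /= => h.
    have dl0 : 0 < V1 x - beta x * a - V0 x by lra.
    pose n := Num.truncn (beta x / (V1 x - beta x * a - V0 x)).
    exists n => //; rewrite /A /S /= mulrDr.
    have h1 := Num.Theory.truncnS_gt (beta x / (V1 x - beta x * a - V0 x)).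
    rewrite -/n ltr_pdivrMr // in h1.
    have h2 : beta x * n.+1%:R^-1 < V1 x - beta x * a - V0 x.
      by rewrite -[_ * _^-1]/(_ / _) ltr_pdivrMr // mulrC.
    move: h2; move: (beta x * n.+1%:R^-1) => t; lra.
  have mSt : measurable St by rewrite -UA; exact: bigcupT_measurable.
  have PSa : P (S a) = P St.
    have mtie : measurable [set x | V0 x = V1 x - beta x * a].
      have mg : measurable_fun setT (fun x => V1 x - beta x * a).
        by apply: measurable_funB => //; apply: measurable_funM => //; exact: measurable_cst.
      suff -> : [set x | V0 x = V1 x - beta x * a] = (fun x => V0 x == V1 x - beta x * a) @^-1` [set true].
        by rewrite -[X in measurable X]setTI; apply: (measurable_fun_eqr mV0 mg measurableT).
      by apply/seteqP; split => x /=; move/eqP.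
    have -> : S a = St `|` [set x | V0 x = V1 x - beta x * a].
      apply/seteqP; split => x; rewrite /S /St /=.
        by rewrite le_eqVlt => /orP[/eqP ->|->]; [right|left].
      by case=> [/ltW|->].
    rewrite measureU //; first by rewrite [X in _ + X](_ : _ = 0) ?adde0 //; exact: Htie.
    by apply/seteqP; split => x //= [h1 h2]; move: h1; rewrite /St /= h2 ltxx.
  have cv : (P \o A) @ \oo --> (q a)%:E.
    rewrite -Qfin PSa -UA; apply: nondecreasing_cvg_mu => //; by rewrite UA.
  have cv' : (fun n => q (a + n.+1%:R^-1)) @ \oo --> q a.
    have : (P \o A) = (fun n => (q (a + n.+1%:R^-1))%:E).
      by apply: funext => n; rewrite /= /A Qfin.
    by move=> E; move: cv; rewrite E => /fine_cvgP [_ H].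
  have := cv'; move/cvgrPdist_lt => /(_ _ e0) [N _ HN].
  exists N.+1%:R^-1; first by rewrite invr_gt0.
  move=> x /andP[ax xa].
  have := HN N (leqnn N); rewrite ltr_norml => /andP[h1 h2].
  have := qmono x (a + N.+1%:R^-1) (ltW xa).
  lra.
case: (pselect (exists y, Y y)) => [[y0 Yy0]|nY].
- have [/andP[pL0 _] /andP[pH0 _]] := Yp y0 Yy0.
  apply: (@apt_of R Y q1 q pH).
  + by move=> y /Yp [].
  + apply: (@cdf_of R q pH) => //.
    * by move=> x y x0 xy; exact: (qmono _ _ xy).
    * have h := q0 pL0; exact h.
  + have h := q0 pL0; exact h.
  + move=> y p Yy /andP[p0 _].
    have e : q1 p = q p.
      by have := Hq p p0; rewrite /qrum_prob -/(S p) Qfin => -[].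
    by split => // pHp; rewrite e; exact: qH.
- apply: (@apt_of R Y q1 (fun x => if x < 1 then 1 else 0) pH).
  + by move=> y Yy; exfalso; apply: nY; exists y.
  + apply: (@cdf_of R _ 1).
    * move=> x y _ xy; case: ifPn => y1; case: ifPn => x1 //.
      all: try by move: x1; rewrite (le_lt_trans xy y1).
      all: try exact: ler01.
    * by move=> x _; case: ifP => _; rewrite ?ler01 ?lexx.
    * by rewrite ltr01.
    * by move=> x x1; rewrite ltNge x1.
    * move=> a a0 e e0; case: (ltP a 1) => a1.
        exists (1 - a); first by lra.
        move=> x /andP[_ xa]; rewrite ifT; [lra|lra].
      exists 1 => // x /andP[ax _]; rewrite ifF; [lra|].
      by apply/negbTE; rewrite -leNgt; lra.
  + by rewrite ltr01.
  + by move=> y p Yy; exfalso; apply: nY; exists y.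
Qed.
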